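(* Let $I,J\subset[n]$ be nonempty with $I\cup J=[n]$ and $I\cap J=\emptyset$, and let $x,a\in(\mathbb{R}\cup\{-\infty\})^n$, neither identically $-\infty$. Then $$\operatorname{dist}_H(x,\mathcal H^{IJ}_a)=\Big|\max_{i\in I}(x_i+a_i)-\max_{j\in J}(x_j+a_j)\Big|$$ if at least one of these two maxima is finite, and $\operatorname{dist}_H(x,\mathcal H^{IJ}_a)=0$ otherwise.
   Context: $-\infty+c=-\infty$; $|\pm\infty|=+\infty$. The signed tropical hyperplane of type $(I,J)$ is $\mathcal H^{IJ}_a=\{y\in(\mathbb{R}\cup\{-\infty\})^n:\max_{i\in I}(a_i+y_i)=\max_{j\in J}(a_j+y_j)\}$. Hilbert's projective metric: $d(x,y)=\inf\{\lambda-\mu:\lambda,\mu\in\mathbb{R},\ \mu+y_l\le x_l\le\lambda+y_l\ \forall l\}\in[0,+\infty]$ (and $d(\bot,\bot)=0$); $\operatorname{dist}_H(x,B)=\inf_{y\in B}d(x,y)$. *)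

(* Defs.v *)
(* Vectors in (R ∪ {-oo})^n are modelled as
   'I_n -> \bar R with every entry different from +oo. *)
From HB Require Import structures.
From mathcomp Require Import all_boot all_order all_algebra.
From mathcomp Require Import all_classical all_reals.
From mathcomp Require Import ereal.
Set Implicit Arguments. Unset Strict Implicit. Unset Printing Implicit Defensive.
Import Order.TTheory GRing.Theory Num.Theory.
Local Open Scope classical_set_scope.
Local Open Scope ring_scope.
Local Open Scope ereal_scope.

Definition trop_vec (R : realType) (n : nat) (y : 'I_n -> \bar R) : Prop :=
  forall l, y l != +oo.

Definition is_bot (R : realType) (n : nat) (y : 'I_n -> \bar R) : Prop :=
  forall l, y l = -oo.

Definition tmax (R : realType) (n : nat) (K : {set 'I_n})
  (u v : 'I_n -> \bar R) : \bar R :=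
  \big[maxe/-oo]_(i in K) (u i + v i).

Definition trop_hyperplane (R : realType) (n : nat) (I J : {set 'I_n})
  (a : 'I_n -> \bar R) : set ('I_n -> \bar R) :=
  [set y | trop_vec y /\ tmax I a y = tmax J a y].

(* Hilbert's projective metric, with d(⊥,⊥) = 0 and inf ∅ = +oo *)
Definition hilbert (R : realType) (n : nat) (x y : 'I_n -> \bar R) : \bar R :=
  if `[< is_bot x /\ is_bot y >] then 0
  else ereal_inf [set e | exists lam mu : R,
         (forall l, mu%:E + y l <= x l /\ x l <= lam%:E + y l) /\
         e = (lam - mu)%:E].

Definition distH (R : realType) (n : nat) (x : 'I_n -> \bar R)
  (B : set ('I_n -> \bar R)) : \bar R :=
  ereal_inf [set hilbert x y | y in B].

(* Main.v *)
Require Import Defs.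
From HB Require Import structures.
From mathcomp Require Import all_boot all_order all_algebra.
From mathcomp Require Import all_classical all_reals.
From mathcomp Require Import ereal.
From mathcomp Require Import lra.
Import Order.TTheory GRing.Theory Num.Theory.
Local Open Scope classical_set_scope.
Local Open Scope ring_scope.
Local Open Scope ereal_scope.

Section H.
Variables (R : realType) (n : nat).
Implicit Types (K : {set 'I_n}) (F G : 'I_n -> \bar R).

Lemma bm_le K F G : (forall i, i \in K -> F i <= G i) ->
  \big[maxe/-oo]_(i in K) F i <= \big[maxe/-oo]_(i in K) G i.
Proof. exact: le_bigmax2. Qed.

Lemma bm_ge K F i : i \in K -> F i <= \big[maxe/-oo]_(i in K) F i.
Proof. move=> iK; exact: le_bigmax_cond. Qed.

Lemma bm_ub K F z : (forall i, i \in K -> F i <= z) ->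
  \big[maxe/-oo]_(i in K) F i <= z.
Proof. move=> h; apply: bigmax_le => //; exact: leNye. Qed.

Lemma bm_shift_le K F (c : R) :
  \big[maxe/-oo]_(i in K) (F i + c%:E) <= \big[maxe/-oo]_(i in K) F i + c%:E.
Proof. apply: bm_ub => i iK; apply: leeD2r; exact: bm_ge. Qed.

Lemma bm_shift K F (c : R) :
  \big[maxe/-oo]_(i in K) (F i + c%:E) = \big[maxe/-oo]_(i in K) F i + c%:E.
Proof.
apply/le_anti/andP; split; first exact: bm_shift_le.
have h := bm_shift_le K (fun i => F i + c%:E) (- c)%R.
have e : forall z : \bar R, z + c%:E + (- c)%:E = z.
  by case=> [r| |] //=; rewrite -EFinD; congr (_%:E); lra.
rewrite (eq_bigr _ (fun i _ => e (F i))) in h.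
have e' : forall z : \bar R, z + (- c)%:E + c%:E = z.
  by case=> [r| |] //=; rewrite -EFinD; congr (_%:E); lra.
have := leeD2r c%:E h. by rewrite e'.
Qed.

Lemma bm_ltey K F : (forall i, F i != +oo) -> \big[maxe/-oo]_(i in K) F i != +oo.
Proof.
move=> h; elim/big_ind: _ => //.
move=> u v hu hv; rewrite /maxe; by case: ifP.
Qed.

Lemma key (A B G : \bar R) (lam mu : R) : A <= lam%:E + G -> B <= lam%:E + G ->
  mu%:E + G <= A -> mu%:E + G <= B -> G != +oo ->
  (A \is a fin_num \/ B \is a fin_num) -> `|A - B| <= (lam - mu)%:E.
Proof.
case: A => [A| |]; case: B => [B| |]; case: G => [G| |] //=;
  rewrite ?lee_fin => h1 h2 h3 h4 _ //; try by case.
move=> _; rewrite ler_norml; apply/andP; split; lra.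
Qed.

Lemma up K (x a y : 'I_n -> \bar R) (lam : R) :
  (forall l, x l <= lam%:E + y l) -> tmax K x a <= lam%:E + tmax K a y.
Proof.
move=> h; rewrite /tmax addeC -bm_shift; apply: bm_le => i _.
by rewrite -addeA (addeC (y i)) (addeC (x i)); apply: leeD2l.
Qed.

Lemma dn K (x a y : 'I_n -> \bar R) (mu : R) :
  (forall l, mu%:E + y l <= x l) -> mu%:E + tmax K a y <= tmax K x a.
Proof.
move=> h; rewrite /tmax addeC -bm_shift; apply: bm_le => i _.
by rewrite -addeA (addeC (y i)) (addeC (x i)); apply: leeD2l.
Qed.

Lemma lowb I J (x a y : 'I_n -> \bar R) (lam mu : R) :
  trop_vec y -> trop_vec a -> tmax I a y = tmax J a y ->
  (forall l, mu%:E + y l <= x l /\ x l <= lam%:E + y l) ->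
  (tmax I x a \is a fin_num \/ tmax J x a \is a fin_num) ->
  `|tmax I x a - tmax J x a| <= (lam - mu)%:E.
Proof.
move=> ty ta hy h; apply: (@key _ _ (tmax I a y)).
- by apply: up => l; case: (h l).
- by rewrite hy; apply: up => l; case: (h l).
- by apply: dn => l; case: (h l).
- by rewrite hy; apply: dn => l; case: (h l).
- apply: bm_ltey => i; move: (ta i) (ty i); case: (a i) => [r| |]; case: (y i) => [s| |] //.
Qed.
End H.

Theorem proposition5p3 (R : realType) (n : nat) (I J : {set 'I_n})
  (x a : 'I_n -> \bar R) :
  I != finset.set0 -> J != finset.set0 ->
  (I :|: J)%SET = finset.setT -> (I :&: J)%SET = finset.set0 ->
  trop_vec x -> trop_vec a -> ~ is_bot x -> ~ is_bot a ->
  ((tmax I x a \is a fin_num \/ tmax J x a \is a fin_num) ->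
     distH x (trop_hyperplane I J a) = `|tmax I x a - tmax J x a|) /\
  (~ (tmax I x a \is a fin_num \/ tmax J x a \is a fin_num) ->
     distH x (trop_hyperplane I J a) = 0).
Proof.
move=> I0 J0 IJT IJ0 tx ta nbx nba.
have hil : forall y, hilbert x y = ereal_inf [set e | exists lam mu : R,
    (forall l, mu%:E + y l <= x l /\ x l <= lam%:E + y l) /\ e = (lam - mu)%:E].
  by move=> y; rewrite /hilbert asboolF // => -[].
have comm : forall K, tmax K a x = tmax K x a.
  by move=> K; apply: eq_bigr => i _; rewrite addeC.
have dist_le : forall y (lam mu : R), trop_vec y -> tmax I a y = tmax J a y ->
   (forall l, mu%:E + y l <= x l /\ x l <= lam%:E + y l) ->
   distH x (trop_hyperplane I J a) <= (lam - mu)%:E.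
  move=> y lam mu ty hy h.
  apply: (@le_trans _ _ (hilbert x y)).
    by apply: ereal_inf_lbound; exists y.
  rewrite hil; apply: ereal_inf_lbound; by exists lam, mu.
have ltK : forall K, tmax K x a != +oo.
  by move=> K; apply: bm_ltey => i; move: (tx i) (ta i); case: (x i); case: (a i).
split.
- move=> hf; apply/le_anti/andP; split; last first.
    apply/ereal_infP => _ [y [ty hy] <-]; rewrite hil.
    apply/ereal_infP => _ [lam [mu [h ->]]]; exact: lowb ty ta hy h hf.
  have ltI := ltK I; have ltJ := ltK J.
  case EA: (tmax I x a) ltI hf => [A| |] // _ hf;
    case EB: (tmax J x a) ltJ hf => [B| |] // _ hf; last by case: hf.
  + set c := (A - B)%R.
    pose y := fun l => if l \in I then x l + (- c)%:E else x l.
    have [lam [mu [[hl1 hl2] [[hm1 hm2] hlm]]]] : exists lam mu : R,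
        ((c <= lam)%R /\ (0 <= lam)%R) /\ ((mu <= c)%R /\ (mu <= 0)%R) /\ (lam - mu = `|c|)%R.
      case: (lerP 0 c) => hc; [exists c, 0%R | exists 0%R, c];
        (split; [split; lra | split; [split; lra | ]]).
        by rewrite ger0_norm // subr0.
      by rewrite ltr0_norm // sub0r.
    apply: (@le_trans _ _ (lam - mu)%:E); last by rewrite hlm -EFinD abse_EFin.
    apply: (dist_le y).
    * move=> l; rewrite /y; case: ifP => _; move: (tx l); case: (x l) => //.
    * have e1 : tmax I a y = B%:E.
        rewrite /tmax (eq_bigr (fun i => x i + a i + (- c)%:E)); last first.
          by move=> i iI; rewrite /y iI addeC addeAC.
        rewrite bm_shift; rewrite /tmax in EA; rewrite EA -EFinD /c; congr (_%:E); lra.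
      have e2 : tmax J a y = B%:E.
        rewrite -EB /tmax; apply: eq_bigr => i iJ; rewrite /y.
        have : i \in (I :&: J)%SET = false by rewrite IJ0 inE.
        by rewrite inE iJ andbT => ->; rewrite addeC.
      by rewrite e1 e2.
    * move=> l; rewrite /y; case: ifP => _; move: (tx l); case: (x l) => [r| |] //= _;
        rewrite ?lee_fin; try (split; lra); split => //.
  + by rewrite /= leey.
  + by rewrite /= leey.
- move=> hf.
  have EA : tmax I x a = -oo.
    move: (ltK I) hf; case: (tmax I x a) => // r _ []; by left.
  have EB : tmax J x a = -oo.
    move: (ltK J) hf; case: (tmax J x a) => // r _ []; by right.
  apply/le_anti/andP; split.
    apply: (le_trans (dist_le x 0%R 0%R tx _ _)); last by rewrite subrr.
      by rewrite !comm EA EB.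
    by move=> l; rewrite add0e.
  apply/ereal_infP => _ [y [ty hy] <-]; rewrite hil.
  apply/ereal_infP => _ [lam [mu [h ->]]].
  have [l hl] : exists l, x l != -oo.
    apply: contrapT => hn; apply: nbx => l; apply/eqP; apply: contrapT => hl.
    by apply: hn; exists l; apply/negP.
  case: (h l); move: (tx l) hl (ty l); case: (x l) => [r| |] //; case: (y l) => [s| |] //= _ _ _;
    rewrite ?lee_fin => h1 h2; lra.
Qed.
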